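(* For every set $S\subseteq V$ of vaccinated nodes, the expected total reward equals $$r(S)=\sum_{i\in S}\Big|N_i\setminus \bigcup_{j\in N_i\cap S}N_j\Big|\,\mathbb{P}\{Z_i>\tau\}=\sum_{i\in S}\Big(n_i-\Big|\bigcup_{j\in N_i\cap S}N_j\Big|\Big)\mathbb{P}\{Z_i>\tau\}.$$
   Context: Let $G=(V,E)$ be a finite tree with $|V|=n$, rooted at a node $s$ (the infection source). For a node $i$: $d_i$ is its depth (number of edges on the path from $s$ to $i$); $A_i$ is the set of ancestors of $i$ (strict, including its parent); $N_i$ is the set of descendants of $i$ (strict, not including $i$); $n_i=|N_i|$. Each edge $e$ carries an independent random variable $X_e\sim\mathrm{Exp}(\lambda)$ with $\lambda>0$, and $Z_i=\sum_{e \text{ on the path from } s \text{ to } i}X_e$ is the infection time of $i$ (so $Z_s=0$; $Z_i$ is a sum of $d_i$ i.i.d. $\mathrm{Exp}(\lambda)$ variables). The immunization time $\tau\ge 0$ is a single random variable, common to all vaccinated nodes and independent of $(X_e)_{e\in E}$. For $S\subseteq V$ (the vaccinated set), a node $i\in S$ becomes immune iff $Z_i>\tau$, and an immune node saves all its descendants. The expected total reward is defined as $r(S)=\mathbb{E}\big[\,\big|\bigcup_{i\in S:\,Z_i>\tau}N_i\big|\,\big]$, the expected number of nodes that are descendants of at least one immune vaccinated node. *)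

(* Defs.v *)
From HB Require Import structures.
From mathcomp Require Import all_boot all_order all_algebra.
From mathcomp Require Import all_classical all_reals all_analysis.
Set Implicit Arguments. Unset Strict Implicit. Unset Printing Implicit Defensive.
Import Order.TTheory GRing.Theory Num.Theory.
Local Open Scope classical_set_scope.
Local Open Scope ring_scope.

(* A finite tree on the finite type V rooted at s is given by a parent map
   par : V -> V with par s = s and such that every node reaches the root
   by iterating par (at most #|V| times). *)
Definition is_rooted_tree (V : finType) (par : V -> V) (s : V) : Prop :=
  par s = s /\ forall i : V, iter #|V| par i = s.

Definition is_ancestor (V : finType) (par : V -> V) (j i : V) : bool :=
  [exists k : 'I_#|V|.+1, (0 < (k : nat))%N && (iter k par i == j)] && (j != i).

Definition descendants (V : finType) (par : V -> V) (i : V) : {set V} :=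
  [set j | is_ancestor par i j].

(* edges of the tree, indexed by their child endpoint (a non-root node) *)
Definition edge (V : finType) (s : V) : finType := {i : V | i != s}.

(* Z_i(w) = sum of the edge variables on the path from s to i; the edges on
   that path are those whose child endpoint is i or a strict ancestor of i *)
Definition infection_time (V : finType) (par : V -> V) (s : V) (T : Type)
  (R : realType) (X : edge s -> T -> R) (w : T) (i : V) : R :=
  \sum_(e : edge s | (val e == i) || is_ancestor par (val e) i) X e w.

Definition mutually_independent d (T : measurableType d) (R : realType)
  (P : probability T R) (I : finType) (Y : I -> {RV P >-> R}) : Prop :=
  forall B : I -> set R, (forall i, measurable (B i)) ->
    P (\bigcap_(i in [set: I]) (Y i @^-1` B i)) =
    (\prod_(i : I) P (Y i @^-1` B i))%E.

Definition edge_tau_family d (T : measurableType d) (R : realType)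
  (P : probability T R) (V : finType) (s : V)
  (X : edge s -> {RV P >-> R}) (tau : {RV P >-> R}) : option (edge s) -> {RV P >-> R} :=
  fun o => match o with Some e => X e | None => tau end.

Definition saved_set (V : finType) (par : V -> V) (s : V) (T : Type)
  (R : realType) (X : edge s -> T -> R) (tau : T -> R) (S : {set V}) (w : T) : {set V} :=
  [set k | [exists i in S, (tau w < infection_time par X w i) && (k \in descendants par i)]].

Definition reward d (T : measurableType d) (R : realType) (P : probability T R)
  (V : finType) (par : V -> V) (s : V) (X : edge s -> {RV P >-> R})
  (tau : {RV P >-> R}) (S : {set V}) : \bar R :=
  'E_P[fun w => (#|saved_set par (fun e => X e : T -> R) tau S w|)%:R].

(* Main.v *)
Require Import Defs.
From HB Require Import structures.
From mathcomp Require Import all_boot all_order all_algebra.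
From mathcomp Require Import all_classical all_reals all_analysis.
Import Order.TTheory GRing.Theory Num.Theory.
Set Implicit Arguments. Unset Strict Implicit. Unset Printing Implicit Defensive.

Section Tree.
Variables (V : finType) (par : V -> V) (s : V).
Hypothesis Ht : is_rooted_tree par s.

Lemma iter_fix n : iter n par s = s.
Proof. by case: Ht => ps _; elim: n => //= n ->. Qed.

Lemma iter_big n i : #|V| <= n -> iter n par i = s.
Proof.
move=> le; rewrite -(subnK le) iterD; case: Ht => _ ->; exact: iter_fix.
Qed.

Lemma ancP j i : reflect ((exists2 k, 0 < k & iter k par i = j) /\ j != i)
   (is_ancestor par j i).
Proof.
apply: (iffP idP).
  rewrite /is_ancestor => /andP[/existsP[k /andP[k0 /eqP hk]] ne].
  by split=> //; exists k.
case=> [[k k0 hk] ne]; rewrite /is_ancestor ne andbT.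
have cV : 0 < #|V| by apply/card_gt0P; exists s.
case: (leqP k #|V|) => hkV.
  by apply/existsP; exists (Ordinal (hkV : k < #|V|.+1)) => /=; rewrite k0 hk eqxx.
apply/existsP; exists (Ordinal (leqnn #|V|.+1)) => /=.
by rewrite cV /= iter_big // -hk iter_big // ltnW.
Qed.

Lemma anc_irr i : ~~ is_ancestor par i i.
Proof. by rewrite /is_ancestor eqxx andbF. Qed.

Lemma anc_trans a b c : is_ancestor par a b -> is_ancestor par b c ->
  is_ancestor par a c.
Proof.
move=> /ancP[[k2 k20 h2] ne2] /ancP[[k1 k10 h1] ne1]; apply/ancP; split.
  by exists (k2 + k1); [rewrite addn_gt0 k20 | rewrite iterD h1].
apply/negP => /eqP eac; subst a.
have hm m : iter (m * (k2 + k1)) par c = c.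
  elim: m => [|m ih] //; by rewrite mulSn iterD ih iterD h1.
have cs : c = s.
  rewrite -{1}(hm #|V|) iter_big //.
  by rewrite -{1}(muln1 #|V|) leq_mul2l addn_gt0 k20 orbT.
move: ne1; rewrite -h1 cs iter_fix eqxx //.
Qed.

Lemma anc_chain i i' k : is_ancestor par i k -> is_ancestor par i' k ->
  [\/ i = i', is_ancestor par i i' | is_ancestor par i' i].
Proof.
have key a b k1 k2 : k1 <= k2 -> iter k1 par k = a -> iter k2 par k = b ->
    a = b \/ is_ancestor par b a.
  move=> le h1 h2; case: (eqVneq a b) => [->|nab]; first by left.
  right; apply/ancP; split; last by rewrite eq_sym.
  exists (k2 - k1).
    rewrite subn_gt0 ltn_neqAle le andbT; apply/eqP => ek.
    by move/eqP: nab; apply; rewrite -h1 -h2 ek.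
  by rewrite -h1 -iterD subnK.
move=> /ancP[[k1 _ h1] _] /ancP[[k2 _ h2] _].
case: (leqP k1 k2) => le.
  by case: (key _ _ _ _ le h1 h2) => [->|?]; [constructor 1|constructor 3].
by case: (key _ _ _ _ (ltnW le) h2 h1) => [->|?]; [constructor 1|constructor 2].
Qed.

End Tree.

Section Count.
Variables (V : finType) (par : V -> V) (s : V).
Hypothesis Ht : is_rooted_tree par s.
Local Notation N := (descendants par).
Definition Mset (S : {set V}) i := N i :\: (\bigcup_(j in N i :&: S) N j)%SET.

Lemma inN i k : (k \in N i) = is_ancestor par i k.
Proof. by rewrite inE. Qed.

Lemma N_sub i j : j \in N i -> N j \subset N i.
Proof. rewrite inN => h; apply/fintype.subsetP => k; rewrite !inN => h2. exact (anc_trans Ht h h2). Qed.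

Lemma N_proper i j : j \in N i -> N j \proper N i.
Proof.
move=> h; rewrite finset.properEneq N_sub // andbT; apply/eqP => e.
by move: h; rewrite -e inN (negbTE (anc_irr _ _)).
Qed.

Lemma bigU_sub S i : (\bigcup_(j in N i :&: S) N j)%SET \subset N i.
Proof. by apply/finset.bigcupsP => j; rewrite inE => /andP[h _]; exact: N_sub. Qed.

Variable (S : {set V}) (A : V -> bool).
Hypothesis Amono : forall i j, is_ancestor par i j -> A i -> A j.

Lemma Muniq k i i' : i \in S -> i' \in S -> k \in Mset S i -> k \in Mset S i' -> i = i'.
Proof.
move=> iS i'S; rewrite !inE => /andP[nk1 k1] /andP[nk2 k2].
case: (anc_chain Ht k1 k2) => // h.
  by move/finset.bigcupP: nk1; case; exists i'; [rewrite !inE h i'S | rewrite inE].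
by move/finset.bigcupP: nk2; case; exists i; [rewrite !inE h iS | rewrite inE].
Qed.

Lemma count_k k :
  #|[set i | (i \in S) && ((k \in Mset S i) && A i)]| =
  [exists i in S, A i && (k \in N i)].
Proof.
case: existsP => [[i0 /andP[i0S /andP[Ai0 ki0]]]|nex].
  have := @arg_minnP V i0 (fun i => (i \in S) && (k \in N i)) (fun i => #|N i|).
  rewrite /= i0S ki0 => /(_ isT); case=> i /andP[iS ki] imin.
  have kM : k \in Mset S i.
    rewrite inE ki andbT; apply/finset.bigcupP => -[j]; rewrite inE => /andP[ji jS] kj.
    have := imin j; rewrite /= jS kj => /(_ isT); rewrite leqNgt.
    by rewrite (proper_card (N_proper ji)).
  have Ai : A i.
    move: (ki) (ki0); rewrite !inN => ki' ki0'.
    case: (anc_chain Ht ki' ki0') => [->//|h|h].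
      exfalso; move: (kM); rewrite inE => /andP[/finset.bigcupP nb _]; apply: nb.
      by exists i0; [rewrite !inE h i0S | exact: ki0].
    exact: Amono h Ai0.
  rewrite (_ : [set _ | _] = [set i]) ?cards1 //; apply/finset.setP => j; rewrite finset.in_set finset.in_set1.
  apply/idP/idP => [/andP[jS /andP[kj _]]|/eqP ->]; last by rewrite iS kM Ai.
  by apply/eqP; exact: Muniq jS iS kj kM.
rewrite (_ : [set _ | _] = finset.set0) ?cards0 //; apply/finset.setP => j; rewrite !inE.
apply/negP => /andP[jS /andP[kj Aj]]; apply: nex; exists j.
by rewrite jS Aj; move: kj; rewrite inE => /andP[_ ->].
Qed.

Lemma sum_bool (P : pred V) (b : V -> bool) :
  \sum_(i | P i) (b i : nat) = #|[set i | P i && b i]|.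
Proof.
rewrite -sum1_card big_mkcond [RHS]big_mkcond; apply: eq_bigr => i _.
by rewrite inE; case: (P i); case: (b i).
Qed.

Lemma count_core :
  #|[set k | [exists i in S, A i && (k \in N i)]]| = \sum_(i in S) #|Mset S i| * A i.
Proof.
transitivity (\sum_(i in S) \sum_k ((k \in Mset S i) && A i : nat)); last first.
  apply: eq_bigr => i _; rewrite -sum_nat_const [RHS]big_mkcond /=; apply: eq_bigr => k _.
  by case: (k \in _).
rewrite exchange_big /= -sum1_card big_mkcond /=; apply: eq_bigr => k _.
by rewrite inE sum_bool count_k; case: [exists _ in _, _].
Qed.

End Count.

Local Open Scope classical_set_scope.
Local Open Scope ring_scope.

Section Prob.
Context (d : measure_display) (T : measurableType d) (R : realType)
  (P : probability T R) (V : finType) (par : V -> V) (s : V)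
  (X : edge s -> {RV P >-> R}) (tau : {RV P >-> R}).
Hypothesis Ht : is_rooted_tree par s.
Local Notation Z i w := (infection_time par (fun e => X e : T -> R) w i).

Lemma Zmono w i j : (forall e, 0 <= X e w) -> is_ancestor par i j -> Z i w <= Z j w.
Proof.
move=> X0 hij; rewrite /infection_time big_mkcond [leRHS]big_mkcond /=.
apply: ler_sum => e _.
case: ifPn => [/orP h|_]; last by case: ifP.
rewrite ifT //; apply/orP; right; case: h => [/eqP ->//|h]; exact (anc_trans Ht h hij).
Qed.

Lemma saved_card w S : (forall e, 0 <= X e w) ->
  #|saved_set par (fun e => X e : T -> R) tau S w| =
  (\sum_(i in S) #|Mset par S i| * ((tau w < Z i w)%R : nat))%N.
Proof.
move=> X0; rewrite /saved_set (count_core Ht) // => i j hij /= hi.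
exact: (lt_le_trans hi (Zmono X0 hij)).
Qed.

Lemma mZ i : measurable_fun setT (fun w => Z i w).
Proof.
rewrite /infection_time.
have -> : (fun w => \sum_(e : edge s | (val e == i) || is_ancestor par (val e) i) X e w)
  = fun w => \sum_(e <- index_enum (edge s))
       (if (val e == i) || is_ancestor par (val e) i then X e w else 0).
  by apply/funext => w; apply: big_mkcond.
apply: measurable_sum => e; case: ((val e == i) || is_ancestor par (val e) i); [exact: measurable_funP | exact: measurable_cst].
Qed.

Definition Aset i := [set w | tau w < Z i w].

Lemma mA i : measurable (Aset i).
Proof.
have -> : Aset i = (fun w => Z i w - tau w) @^-1` `]0, +oo[.
  by apply/seteqP; split => w /=; rewrite in_itv /= andbT subr_gt0.
rewrite -[_ @^-1` _]setTI.
apply: (measurable_realfun.measurable_funB (mZ i) (measurable_funP tau)) => //.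
Qed.


Lemma meas_has (I : Type) (l : seq I) (p : I -> T -> bool) :
  (forall i, measurable [set w | p i w]) -> measurable [set w | has (p^~ w) l].
Proof.
move=> mp; elim: l => [|a l ih] /=.
  have -> : [set w : T | false] = set0 by apply/seteqP; split => w.
  exact: measurable0.
have -> : [set w | p a w || has (p^~ w) l] = [set w | p a w] `|` [set w | has (p^~ w) l].
  by apply/seteqP; split => w /=; [move/orP | move=> /orP].
exact: measurableU.
Qed.

Definition Bset S k := [set w | k \in saved_set par (fun e => X e : T -> R) tau S w].

Lemma mB S k : measurable (Bset S k).
Proof.
have -> : Bset S k = [set w | has (fun i => (i \in S) &&
     ((tau w < Z i w) && (k \in descendants par i))) (index_enum V)].
  apply/seteqP; split => w; rewrite /Bset /saved_set /= inE.
    by case/existsP => i h; apply/hasP; exists i => //; rewrite mem_index_enum.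
  by case/hasP => i _ h; apply/existsP; exists i.
apply: meas_has => i.
have e0 : [set w : T | false] = set0 by apply/seteqP; split => w.
case: (i \in S) => /=; last by rewrite e0; exact: measurable0.
case: (k \in descendants par i).
  rewrite (_ : [set w | _] = Aset i); first exact: mA.
  by apply/seteqP; split => w; rewrite /Aset /= andbT.
rewrite (_ : [set w | _] = set0); first exact: measurable0.
by apply/seteqP; split => w; rewrite /= andbF.
Qed.

Lemma ae_X0 (lambda : R) :
  (forall (e : edge s) (A : set R), measurable A ->
     distribution P (X e) A = exponential_prob lambda A) ->
  {ae P, forall w, forall e, 0 <= X e w}.
Proof.
move=> hX; apply: filter_forall => e.
exists (X e @^-1` `]-oo, 0[); split.
- by apply: measurable_funPTI; exact: measurable_itv.
- have := hX e _ (measurable_itv `]-oo, 0[); rewrite /distribution /pushforward => ->.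
  apply: integral0_eq => x; rewrite /= in_itv /= => x0.
  by rewrite lt0_exponential_pdf.
- by move=> w /= h; rewrite in_itv /= ltNge; apply/negP.
Qed.

End Prob.

Lemma card_indic d (T : measurableType d) (R : realType) (P : probability T R)
  (V : finType) (par : V -> V) (s : V) (X : edge s -> {RV P >-> R}) (tau : {RV P >-> R})
  (S : {set V}) w :
  (#|saved_set par (fun e => X e : T -> R) tau S w|%:R : R) =
  \sum_(k <- index_enum V) \1_(Bset par X tau S k) w.
Proof.
rewrite -sum1_card natr_sum big_mkcond; apply: eq_bigr => k _; rewrite indicE.
have -> : (w \in Bset par X tau S k) = (k \in saved_set par (fun e => X e : T -> R) tau S w).
  by apply/idP/idP => [/set_mem|/mem_set].
by case: ifP.
Qed.

Unset Implicit Arguments.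
Theorem theorem1 (d : measure_display) (T : measurableType d) (R : realType)
  (P : probability T R) (V : finType) (par : V -> V) (s : V)
  (lambda : R) (X : edge s -> {RV P >-> R}) (tau : {RV P >-> R}) :
  is_rooted_tree par s ->
  0 < lambda ->
  (forall (e : edge s) (A : set R), measurable A ->
     distribution P (X e) A = exponential_prob lambda A) ->
  (forall w, 0 <= tau w) ->
  mutually_independent (edge_tau_family X tau) ->
  forall S : {set V},
    reward par X tau S =
      (\sum_(i in S)
        (#|descendants par i :\: (\bigcup_(j in descendants par i :&: S) descendants par j)%SET|%:R)%:E
        * P [set w | (tau w < infection_time par (fun e => X e : T -> R) w i)%R])%E
    /\
    reward par X tau S =
      (\sum_(i in S)
        ((#|descendants par i|%:R - #|(\bigcup_(j in descendants par i :&: S) descendants par j)%SET|%:R)%:E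
        * P [set w | (tau w < infection_time par (fun e => X e : T -> R) w i)%R]))%E.
Proof.
move=> Ht lam0 hX tau0 indep S.
have key : reward par X tau S =
   (\sum_(i in S) (#|Mset par S i|%:R)%:E * P (Aset par X tau i))%E.
  rewrite /reward unlock /=.
  transitivity (\int[P]_w \sum_(k <- index_enum V) (\1_(Bset par X tau S k) w)%:E)%E.
    by apply: eq_integral => w _; rewrite sumEFin card_indic.
  transitivity (\int[P]_w \sum_(i <- index_enum V)
     (if i \in S then (#|Mset par S i|%:R)%:E * (\1_(Aset par X tau i) w)%:E else 0))%E.
    apply: ae_eq_integral => //.
    - apply: emeasurable_sum => k; apply/measurable_realfun.measurable_EFinP.
      by apply: measurable_realfun.measurable_indic; exact: mB.
    - apply: emeasurable_sum => i; case: (i \in S); last exact: measurable_cst.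
      apply: measurable_funeM; apply/measurable_realfun.measurable_EFinP.
      by apply: measurable_realfun.measurable_indic; exact: mA.
    apply: filterS (ae_X0 hX) => w X0 _.
    rewrite -big_mkcond /=.
    rewrite [RHS](eq_bigr (fun i => ((#|Mset par S i|%:R * \1_(Aset par X tau i) w)%:E))); last first.
      by move=> i _; rewrite EFinM.
    rewrite !sumEFin -card_indic (saved_card tau Ht S X0) natr_sum; congr EFin.
    apply: eq_bigr => i _; rewrite natrM indicE; congr (_ * _).
    have -> : (w \in Aset par X tau i) = (tau w < infection_time par (fun e => X e : T -> R) w i)%R.
      by apply/idP/idP => [/set_mem|/mem_set].
    by case: (_ < _)%R.
  rewrite ge0_integral_sum; first last.
  - move=> i x _; case: (i \in S) => //; apply: mule_ge0; rewrite lee_fin //.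
  - move=> i; case: (i \in S); last exact: measurable_cst.
    apply: measurable_funeM; apply/measurable_realfun.measurable_EFinP.
    by apply: measurable_realfun.measurable_indic; exact: mA.
  - by [].
  rewrite [RHS]big_mkcond; apply: eq_bigr => i _; case: (i \in S).
    rewrite ge0_integralZl //.
      by rewrite integral_indic ?setIT //; exact: mA.
    by apply/measurable_realfun.measurable_EFinP; apply: measurable_realfun.measurable_indic; exact: mA.
  by apply: integral0_eq.
split; first exact: key.
rewrite key; apply: eq_bigr => i _; congr (_ * _)%E; congr EFin.
rewrite /Mset cardsD (finset.setIidPr (bigU_sub Ht _ _)) natrB //.
exact: subset_leq_card (bigU_sub Ht _ _).
Qed.
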